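(* For every fixed $n\ge1$, the function $f(x)=\mu(N_n(x)\ge1)$, $x\in\mathbb{N}$, is non-increasing in $x$.
   Context: $\mu$ is the Gauss measure on $(0,1)$, $d\mu(\omega)=\frac{d\omega}{(\log 2)(1+\omega)}$. For irrational $\omega\in(0,1)$, $a_i(\omega)$ denote its continued fraction partial quotients, and $N_n(x)=N_n(x,\omega)=\#\{1\le i\le n: a_i(\omega)=x\}$. *)

(* Defs.v *)
From HB Require Import structures.
From mathcomp Require Import all_boot all_order all_algebra.
From mathcomp Require Import all_classical all_reals all_analysis.
Set Implicit Arguments. Unset Strict Implicit. Unset Printing Implicit Defensive.
Import Order.TTheory GRing.Theory Num.Theory.
Import numFieldNormedType.Exports.
Local Open Scope classical_set_scope.
Local Open Scope ring_scope.

Section Defs.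
Variable R : realType.

Definition gauss_map (w : R) : R := w^-1 - (Num.floor (w^-1))%:~R.

(* partial quotients: a_i(w) = floor (1 / T^{i-1} w), for i >= 1 *)
Definition pq (i : nat) (w : R) : int := Num.floor ((iter i.-1 gauss_map w)^-1).

Definition irrational (w : R) : Prop := ~ exists q : rat, w = ratr q.

Definition Ncount (n x : nat) (w : R) : nat :=
  count (fun i => pq i w == x%:Z) (iota 1 n).

Definition gauss_mu (A : set R) : \bar R :=
  (\int[lebesgue_measure]_(w in A `&` `]0%R, 1%R[) ((ln 2 * (1 + w))^-1)%:E)%E.

Definition Nge1 (n x : nat) : set R :=
  [set w | 0 < w < 1 /\ irrational w /\ (1 <= Ncount n x w)%N].

End Defs.

(* Main.v *)
Require Import Defs.
From HB Require Import structures.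
From mathcomp Require Import all_boot all_order all_algebra.
From mathcomp Require Import all_classical all_reals all_analysis.
From mathcomp Require Import measurable_realfun.
From mathcomp Require Import ring lra.
Import Order.TTheory GRing.Theory Num.Theory.
Import numFieldNormedType.Exports.
Local Open Scope classical_set_scope.
Local Open Scope ring_scope.

Section Digits.
Context {R : realType}.
Implicit Types (w t u : R) (v : seq nat).
Local Notation g := (@gauss_map R).

Definition U : set R := [set w | 0 < w < 1 /\ Defs.irrational w].
Definition dig (u : R) : nat := `|Num.floor (u^-1)|%N.
Definition digs (m : nat) (t : R) : seq nat := [seq dig (iter i g t) | i <- iota 0 m].
Definition phi (a : nat) (t : R) : R := (a%:R + t)^-1.

Lemma irr_inv w : Defs.irrational w -> Defs.irrational w^-1.
Proof.
rewrite /irrational => Hw [q Hq]; apply: Hw; exists q^-1; rewrite fmorphV /= -Hq invrK //.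
Qed.

Lemma irr_addz w (k : int) : Defs.irrational w -> Defs.irrational (w + k%:~R).
Proof.
rewrite /irrational => Hw [q Hq]; apply: Hw; exists (q - k%:~R).
by rewrite rmorphB /= -Hq rmorph_int addrK.
Qed.

Lemma U_floor w : U w -> (1 <= Num.floor w^-1)%R.
Proof.
move=> [/andP[w0 w1] _]; by rewrite floor_ge_int /= invf_ge1 // ltW.
Qed.

Lemma U_dig w : U w -> (dig w)%:R = (Num.floor w^-1)%:~R :> R /\ (0 < dig w)%N.
Proof.
move=> Uw; have h := U_floor _ Uw; rewrite /dig; split.
  by rewrite -[in RHS](@gez0_abs (Num.floor w^-1)) ?(le_trans _ h) //.
by rewrite absz_gt0 gt_eqF // (lt_le_trans _ h).
Qed.

Lemma U_g w : U w -> U (g w).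
Proof.
move=> Uw; have [_ iw] := Uw; have := floor_itv (w^-1); rewrite /gauss_map.
move=> /andP[h1 h2]; split; last first.
  by rewrite -intrN; apply: irr_addz; apply: irr_inv.
apply/andP; split; last by rewrite ltrBlDl; rewrite intrD in h2.
rewrite subr_gt0 lt_neqAle h1 andbT; apply/negP => /eqP E.
apply: (irr_inv _ iw); exists (Num.floor w^-1)%:~R; by rewrite rmorph_int...
Qed.

Lemma U_iter w i : U w -> U (iter i g w).
Proof. by move=> Uw; elim: i => //= i IH; apply: U_g. Qed.

Lemma pq_dig w i : U w -> pq i.+1 w = (dig (iter i g w))%:Z.
Proof.
move=> Uw; rewrite /pq /dig /=; have h := U_floor _ (U_iter _ i Uw).
by rewrite gez0_abs // (le_trans _ h).
Qed.

Lemma Ncount_digs n x w : U w -> (1 <= Ncount n x w)%N = (x \in digs n w).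
Proof.
move=> Uw; rewrite /Ncount (iotaDl 1 0) count_map /digs.
rewrite -has_pred1 has_count count_map.
congr (0 < _)%N; apply: eq_count => i /=; rewrite /= add1n pq_dig //.
Qed.

Lemma digsS n t : digs n.+1 t = dig t :: digs n (g t).
Proof.
rewrite /digs /= (iotaDl 1 0) -map_comp; congr (_ :: _); apply: eq_map => i /=.
by rewrite add0n -iterS iterSr.
Qed.

Lemma digsSr n t : digs n.+1 t = rcons (digs n t) (dig (iter n g t)).
Proof. by rewrite /digs -addn1 iotaD map_cat cats1. Qed.

Lemma dig_phi (a : nat) t : (0 < a)%N -> U t -> dig (phi a t) = a.
Proof.
move=> a0 [/andP[t0 t1] _]; rewrite /dig /phi invrK.
suff -> : Num.floor (a%:R + t) = a%:Z by [].
apply/eqP; rewrite floor_eq; apply/andP; split.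
  by rewrite pmulrn lerDl ltW.
by rewrite intrD pmulrn ltrD2l.
Qed.

Lemma g_phi (a : nat) t : (0 < a)%N -> U t -> g (phi a t) = t.
Proof.
move=> a0 [/andP[t0 t1] _]; rewrite /gauss_map /phi invrK.
have -> : Num.floor (a%:R + t) = a%:Z.
  apply/eqP; rewrite floor_eq; apply/andP; split.
    by rewrite pmulrn lerDl ltW.
  by rewrite intrD pmulrn ltrD2l.
by rewrite -pmulrn addrAC subrr add0r.
Qed.

Lemma U_phi (a : nat) t : (0 < a)%N -> U t -> U (phi a t).
Proof.
move=> a0 [/andP[t0 t1] it]; rewrite /phi; split.
  have aR : 1 <= a%:R :> R by rewrite ler1n.
  have h : 1 < a%:R + t by rewrite (le_lt_trans aR) // ltrDl.
  by rewrite invr_gt0 (lt_trans ltr01 h) invf_lt1 // (lt_trans ltr01 h).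
apply: irr_inv; rewrite addrC; have := irr_addz _ a it; by [].
Qed.

Lemma U_step w (a : nat) (c d : R) : (0 < a)%N -> 0 <= c -> 0 <= d -> d <= 1 ->
  U w ->
  ((dig w == a) && (c < g w < d)) = ((a%:R + d)^-1 < w < (a%:R + c)^-1).
Proof.
move=> a0 c0 d0 d1 Uw; have [/andP[w0 w1] _] := Uw.
have aR : 1 <= a%:R :> R by rewrite ler1n.
have ac : 0 < a%:R + c by lra.
have ad : 0 < a%:R + d by lra.
rewrite invf_plt ?posrE // invf_pgt ?posrE //.
have [dw _] := U_dig _ Uw.
apply/idP/idP.
  move=> /andP[/eqP da /andP[h1 h2]].
  move: h1 h2; rewrite /gauss_map -dw da => h1 h2.
  apply/andP; split; lra.
move=> /andP[h1 h2].
have F : Num.floor w^-1 = a%:Z.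
  apply/eqP; rewrite floor_eq intrD /=; apply/andP; split.
    rewrite -[_%:~R]/(a%:R); lra.
  rewrite -[_%:~R]/(a%:R); lra.
have da : dig w = a by rewrite /dig F.
rewrite da eqxx /= /gauss_map F -[_%:~R]/(a%:R); apply/andP; split; lra.
Qed.

Definition T (v : seq nat) (n : nat) (P : pred (seq nat)) : set R :=
  [set t | U t /\ digs (size v) t = v /\ P (digs n (iter (size v) g t))].
Definition Cyl (v : seq nat) : set R := [set t | U t /\ digs (size v) t = v].

Lemma T0 v P : T v 0 P = if P [::] then Cyl v else set0.
Proof.
rewrite /T /Cyl /=; case: (P [::]); apply/seteqP; split => t /=.
- by case=> ? [].
- by case=> ? ?.
- by case=> ? [].
- by [].
Qed.

Lemma TS v n P : T v n.+1 P =
  \bigcup_k T (rcons v k.+1) n (fun s => P (k.+1 :: s)).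
Proof.
apply/seteqP; split => t /=.
  move=> [Ut [dw Pt]]; have [_ d0] := U_dig _ (U_iter _ (size v) Ut).
  exists (dig (iter (size v) g t)).-1 => //.
  rewrite prednK // /T /= size_rcons digsSr dw iterS; split => //; split => //.
  by rewrite digsS in Pt.
move=> [k _ [Ut []]]; rewrite size_rcons digsSr => /eqP; rewrite eqseq_rcons.
move=> /andP[/eqP dw /eqP dk] Pt; split => //; split => //.
by rewrite digsS -iterS dk.
Qed.

Lemma T_triv v n P : trivIset setT (fun k => T (rcons v k.+1) n (fun s => P (k.+1 :: s))).
Proof.
apply/trivIsetP => i j _ _ ij; apply/seteqP; split => // t [[_ [+ _]] [_ [+ _]]].
rewrite !size_rcons => -> /eqP; rewrite eqseq_rcons eqxx /= => /eqP [] ji.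
by move: ij; rewrite ji eqxx.
Qed.

Lemma Nge1_T n x : Nge1 n x = T [::] n (fun s => x \in s).
Proof.
apply/seteqP; split => t /=.
  by move=> [t01 [it c]]; have Ut : U t by []; rewrite /T /= -Ncount_digs.
by move=> [Ut [_ c]]; case: Ut => t01 it; split => //; split => //; rewrite Ncount_digs.
Qed.

Lemma Cyl_cons_itv (a : nat) v (c d : R) : (0 < a)%N -> 0 <= c -> 0 <= d -> d <= 1 ->
  Cyl v = U `&` `]c, d[ ->
  Cyl (a :: v) = U `&` `](a%:R + d)^-1, (a%:R + c)^-1[.
Proof.
move=> a0 c0 d0 d1 Cw; apply/seteqP; split => t /=.
  move=> [Ut]; rewrite digsS => -[da dw]; split => //.
  have : Cyl v (g t) by split => //; exact: U_g.
  rewrite Cw => -[_]; rewrite /= in_itv /= => cd.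
  by rewrite in_itv /= -U_step // da eqxx cd.
move=> [Ut]; rewrite in_itv /= -U_step // => /andP[/eqP da cd].
split => //; rewrite digsS da; congr (_ :: _).
have : (U `&` `]c, d[) (g t) by split; [exact: U_g | rewrite /= in_itv].
by rewrite -Cw => -[].
Qed.

Lemma Cyl_nil : Cyl [::] = U `&` `]0, 1[.
Proof.
apply/seteqP; split => t /=.
  by move=> [Ut _]; split => //; case: Ut => ? _; rewrite in_itv.
by move=> [Ut _].
Qed.

Lemma Cyl_itv v : all (fun a => 0 < a)%N v -> exists c d : R,
  [/\ 0 <= c, c < d, d <= 1 & Cyl v = U `&` `]c, d[].
Proof.
elim: v => [|a v IH] /=; first by exists 0, 1; split => //; exact: Cyl_nil.
move=> /andP[a0 /IH [c [d [c0 cd d1 Cw]]]].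
have aR : 1 <= a%:R :> R by rewrite ler1n.
exists (a%:R + d)^-1, (a%:R + c)^-1; split.
- by rewrite invr_ge0; lra.
- by rewrite ltf_pV2 ?posrE; lra.
- by rewrite invf_le1; lra.
- by apply: Cyl_cons_itv => //; lra.
Qed.

End Digits.

Section Dens.
Context {R : realType}.
Definition prm := (R * R * R * R)%type.
Definition dens (p : prm) (t : R) : R :=
  let: (A, B, C, E) := p in ((A + B * `|t|) * (C + E * `|t|))^-1.
Definition good (p : prm) : Prop :=
  let: (A, B, C, E) := p in 0 < A /\ 0 <= B /\ 0 < C /\ 0 <= E.
Definition trp (p : prm) (a : nat) : prm :=
  let: (A, B, C, E) := p in (a%:R * A + B, A, a%:R * C + E, C).
Definition trw (p : prm) (v : seq nat) : prm := foldl trp p v.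

Lemma good_trp p a : (0 < a)%N -> good p -> good (trp p a).
Proof.
case: p => [[[A B] C] E] a0 /= [A0 [B0 [C0 E0]]].
have aR : 1 <= a%:R :> R by rewrite ler1n.
split; first by nra. split; first by lra. split; first by nra. lra.
Qed.

Lemma good_trw p v : all (fun a => 0 < a)%N v -> good p -> good (trw p v).
Proof.
elim: v p => [//|a v IH] p /= /andP[a0 av] gp; apply: IH => //; exact: good_trp.
Qed.

Lemma dens_gt0 p t : good p -> 0 < dens p t.
Proof.
case: p => [[[A B] C] E] /= [A0 [B0 [C0 E0]]].
have n0 : 0 <= `|t| by [].
have h1 : 0 <= B * `|t| by apply: mulr_ge0.
have h2 : 0 <= E * `|t| by apply: mulr_ge0.
rewrite invr_gt0; apply: mulr_gt0; lra.
Qed.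

Lemma dens_le p t : good p -> dens p t <= let: (A, B, C, E) := p in (A * C)^-1.
Proof.
case: p => [[[A B] C] E] /= [A0 [B0 [C0 E0]]].
have n0 : 0 <= `|t| by [].
have h1 : 0 <= B * `|t| by apply: mulr_ge0.
have h2 : 0 <= E * `|t| by apply: mulr_ge0.
rewrite lef_pV2 ?posrE; [|apply: mulr_gt0; lra|apply: mulr_gt0; lra].
apply: ler_pM; lra.
Qed.

Lemma dens_cont p : good p -> continuous (dens p).
Proof.
case: p => [[[A B] C] E] /= [A0 [B0 [C0 E0]]] x.
have hn : forall c : R, {for x, continuous (fun t : R => c * `|t|)}.
  move=> c; apply: (@continuousM _ _ (cst c) (@Num.Def.normr _ R)); [exact: cst_continuous|exact: norm_continuous].
have hD : forall c d : R, {for x, continuous (fun t : R => c + d * `|t|)}.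
  move=> c d; apply: (@continuousD _ _ _ (cst c) (fun t : R => d * `|t|)); [exact: cst_continuous|exact: hn].
apply: (@continuousV _ _ (fun t => (A + B * `|t|) * (C + E * `|t|))).
  have n0 : 0 <= `|x| by [].
  have h1 : 0 <= B * `|x| by apply: mulr_ge0.
  have h2 : 0 <= E * `|x| by apply: mulr_ge0.
  apply: lt0r_neq0; apply: mulr_gt0; lra.
exact: (@continuousM _ _ (fun t => A + B * `|t|) (fun t => C + E * `|t|)).
Qed.

Lemma dens_trp p (a : nat) t : (0 < a)%N -> good p -> 0 <= t ->
  dens (trp p a) t = dens p ((a%:R + t)^-1) * ((a%:R + t) ^+ 2)^-1.
Proof.
case: p => [[[A B] C] E] a0 /= [A0 [B0 [C0 E0]]] t0.
have aR : 1 <= a%:R :> R by rewrite ler1n.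
have at0 : 0 < a%:R + t by lra.
rewrite (ger0_norm t0) ger0_norm; last by rewrite invr_ge0 ltW.
rewrite -!invfM; congr (_^-1).
field; lra.
Qed.

Lemma dens_mono p (x y : nat) t : (0 < x)%N -> (x <= y)%N -> good p -> 0 <= t ->
  dens (trp p y) t <= dens (trp p x) t.
Proof.
case: p => [[[A B] C] E] x0 xy /= [A0 [B0 [C0 E0]]] t0.
have xR : 1 <= x%:R :> R by rewrite ler1n.
have yR : x%:R <= y%:R :> R by rewrite ler_nat.
rewrite (ger0_norm t0).
have h1 : x%:R * A <= y%:R * A by apply: ler_wpM2r; lra.
have h2 : x%:R * C <= y%:R * C by apply: ler_wpM2r; lra.
have h3 : 0 <= x%:R * A by apply: mulr_ge0; lra.
have h4 : 0 <= x%:R * C by apply: mulr_ge0; lra.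
have h5 : 0 <= A * t by apply: mulr_ge0; lra.
have h6 : 0 <= C * t by apply: mulr_ge0; lra.
have h7 : A <= x%:R * A by nra.
have h8 : C <= x%:R * C by nra.
rewrite lef_pV2 ?posrE; [|apply: mulr_gt0; lra|apply: mulr_gt0; lra].
apply: ler_pM; lra.
Qed.

End Dens.

Section CoV.
Context {R : realType}.
Local Notation mu := (@lebesgue_measure R).

Definition Fa (a : nat) (t : R) : R := (a%:R + t)^-1.
Definition Fd (a : nat) (t : R) : R := - (Fa a t * Fa a t).

Lemma Fa_derive (a : nat) (x : R) : - a%:R < x -> is_derive x 1 (Fa a) (Fd a x).
Proof.
move=> ax; have ne : a%:R + x != 0 by apply: lt0r_neq0; lra.
have h1 : is_derive x (1:R) (fun t : R => a%:R + t) 1.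
  have h0 : is_derive x (1:R) (cst a%:R + id) (0 + 1) by apply: is_deriveD.
  rewrite add0r in h0; exact: h0.
have := is_deriveV ne h1.
rewrite /Fd /Fa.
have -> : - (a%:R + x) ^- 2 *: (1:R) = - ((a%:R + x)^-1 * (a%:R + x)^-1).
  by rewrite -invfM -expr2 /GRing.scale /= mulr1.
by [].
Qed.

Lemma Fa_der1 a (x : R) : - a%:R < x -> ((Fa a)^`())%classic x = Fd a x.
Proof.
move=> ax; rewrite derive1E; have := Fa_derive _ _ ax; by case => _ ->.
Qed.

Lemma Fa_cont a (x : R) : - a%:R < x -> {for x, continuous (Fa a)}.
Proof.
move=> ax; have ne : a%:R + x != 0 by apply: lt0r_neq0; lra.
apply: (@continuousV _ _ (fun t : R => a%:R + t)) => //.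
by apply: cvgD; [exact: cvg_cst | exact: cvg_id].
Qed.

Lemma Fd_cont a (x : R) : - a%:R < x -> {for x, continuous (Fd a)}.
Proof.
move=> ax; apply: (@continuousN _ _ _ (fun t => Fa a t * Fa a t)).
apply: (@continuousM _ _ (Fa a) (Fa a)); exact: Fa_cont.
Qed.

Lemma der_near a (x : R) : - a%:R < x -> \forall y \near x, Fd a y = ((Fa a)^`())%classic y.
Proof.
move=> ax; near=> y; rewrite Fa_der1 //; near: y; exact: lt_nbhsr.
Unshelve. all: by end_near. Qed.

Lemma der_cont a (x : R) : - a%:R < x -> {for x, continuous ((Fa a)^`())%classic}.
Proof.
move=> ax; have := Fd_cont _ _ ax; rewrite /prop_for /continuous_at => h.
rewrite (Fa_der1 _ _ ax); apply: cvg_trans h; exact: near_eq_cvg (der_near _ _ ax).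
Qed.

Lemma mdens (q : prm) (D : set R) : good q ->
  measurable_fun D (fun x => (dens q x)%:E).
Proof.
move=> gq; apply/measurable_EFinP; apply: measurable_funTS.
apply: continuous_measurable_fun; exact: dens_cont.
Qed.

Lemma cov (p : prm) (a : nat) (c d : R) : (0 < a)%N -> good p -> 0 <= c -> c < d ->
  (\int[mu]_(x in `](a%:R + d)^-1%R, (a%:R + c)^-1%R[) (dens p x)%:E =
  \int[mu]_(x in `]c, d[) (dens (trp p a) x)%:E)%E.
Proof.
move=> a0 gp c0 cd.
have aR : 1 <= a%:R :> R by rewrite ler1n.
have ac : - a%:R < c by lra.
have ad : - a%:R < d by lra.
rewrite -[RHS](@integral_itv_bndoo _ _ _ _ true false); last exact: mdens (good_trp _ _ a0 gp).
rewrite -[LHS](@integral_itv_bndoo _ _ _ _ true false); last exact: mdens.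
change (\int[mu]_(x in `[Fa a d, Fa a c]) (dens p x)%:E = \int[mu]_(x in `[c, d]) (dens (trp p a) x)%:E)%E.
have := @integration_by_substitution_decreasing R (Fa a) (dens p) c d (ltW cd).
move=> /(_ _ _ _ _ _ _) h; rewrite h {h}; last 6 first.
- move=> x y; rewrite !in_itv /= => /andP[cx _] /andP[cy _] xy.
  by rewrite /Fa ltf_pV2 ?posrE; lra.
- by move=> x; rewrite in_itv /= => /andP[cx _]; apply: der_cont; lra.
- by apply: (cvgP (((Fa a)^`())%classic c)); apply: cvg_at_right_filter; exact: der_cont.
- by apply: (cvgP (((Fa a)^`())%classic d)); apply: cvg_at_left_filter; exact: der_cont.
- split.
  + move=> x; rewrite in_itv /= => /andP[cx _].
    have : - a%:R < x by lra.
    by move=> /(Fa_derive a) [].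
  + by apply: cvg_at_right_filter; exact: Fa_cont.
  + by apply: cvg_at_left_filter; exact: Fa_cont.
- by apply: continuous_subspaceT; exact: dens_cont.
apply: eq_integral => x; rewrite inE /= in_itv /= => /andP[cx xd].
  have xa : - a%:R < x by lra.
  congr (_%:E); rewrite !fctE Fa_der1 // /Fd opprK dens_trp //; last by lra.
  by rewrite /Fa -invfM -expr2.
Qed.

End CoV.

Section Meas.
Context {R : realType}.
Local Notation mu := (@lebesgue_measure R).

Definition Qs : set R := range (@ratr R).

Lemma Q_count : countable Qs.
Proof. exact: (card_le_trans (card_image_le _ _) (countableP _)). Qed.

Lemma mQ : measurable Qs.
Proof. apply: countable_measurable; [exact: measurable_set1 | exact: Q_count]. Qed.

Lemma Q0 : mu Qs = 0%E.
Proof. exact: countable_lebesgue_measure0 Q_count. Qed.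

Lemma U_eq (c d : R) : 0 <= c -> d <= 1 -> U `&` `]c, d[ = `]c, d[ `\` Qs.
Proof.
move=> c0 d1; apply/seteqP; split => t /=.
  move=> [[/andP[t0 t1] it] ct]; split => //.
  by move=> [q _ qt]; apply: it; exists q.
move=> [+ nq]; rewrite /= in_itv /= => /andP[ct td].
split; last by apply/andP.
split; first by apply/andP; split; lra.
by move=> [q tq]; apply: nq; exists q.
Qed.

Lemma mU_itv (c d : R) : 0 <= c -> d <= 1 -> measurable (U `&` `]c, d[).
Proof. by move=> c0 d1; rewrite U_eq //; apply: measurableD => //; exact: mQ. Qed.

Lemma intU (c d : R) (q : prm) : 0 <= c -> d <= 1 -> good q ->
  (\int[mu]_(x in U `&` `]c, d[) (dens q x)%:E = \int[mu]_(x in `]c, d[) (dens q x)%:E)%E.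
Proof.
move=> c0 d1 gq; rewrite U_eq //; apply/esym/ge0_negligible_integral => //.
- exact: mQ.
- exact: mdens.
- by move=> x _; rewrite lee_fin ltW // dens_gt0.
- exact: Q0.
Qed.

Lemma Cyl_nilU : Cyl [::] = @U R.
Proof. by apply/seteqP; split => t /=; [case | ]. Qed.

Lemma int_Cyl v p : all (fun a => 0 < a)%N v -> good p ->
  (\int[mu]_(x in Cyl v) (dens p x)%:E = \int[mu]_(x in U) (dens (trw p v) x)%:E)%E.
Proof.
elim: v p => [|a v IH] p /=; first by rewrite Cyl_nilU.
move=> /andP[a0 av] gp.
have [c [d [c0 cd d1 Cv]]] := Cyl_itv (R:=R) _ av.
have aR : 1 <= a%:R :> R by rewrite ler1n.
rewrite (Cyl_cons_itv a v c d a0 c0 _ d1 Cv); last by lra.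
rewrite intU //; last 2 first.
- by rewrite invr_ge0; lra.
- by rewrite invf_le1; lra.
rewrite cov // -intU //; last exact: good_trp.
by rewrite -Cv IH //; exact: good_trp.
Qed.

Lemma mCyl v : all (fun a => 0 < a)%N v -> measurable (@Cyl R v).
Proof.
move=> av; have [c [d [c0 cd d1 Cv]]] := Cyl_itv (R:=R) _ av.
by rewrite Cv; apply: mU_itv.
Qed.

Lemma mT v n P : all (fun a => 0 < a)%N v -> measurable (@T R v n P).
Proof.
elim: n v P => [|n IH] v P av.
  by rewrite T0; case: (P [::]) => //; exact: mCyl.
rewrite TS; apply: bigcupT_measurable => k; apply: IH.
by rewrite all_rcons av andbT.
Qed.

Fixpoint Sum (n : nat) (q : prm) (P : pred (seq nat)) : \bar R :=
  match n with
  | 0 => if P [::] then (\int[mu]_(x in U) (dens q x)%:E)%E else 0%E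
  | n'.+1 => (\sum_(k <oo) Sum n' (trp q k.+1) (fun s => P (k.+1 :: s)))%E
  end.

Lemma int_T v n P p : all (fun a => 0 < a)%N v -> good p ->
  (\int[mu]_(x in T v n P) (dens p x)%:E)%E = Sum n (trw p v) P.
Proof.
elim: n v P => [|n IH] v P av gp /=.
  rewrite T0; case: (P [::]); first exact: int_Cyl.
  exact: integral_set0.
rewrite TS ge0_integral_bigcup //; last 4 first.
- move=> k; apply: mT; by rewrite all_rcons av andbT.
- exact: mdens.
- by move=> x _; rewrite lee_fin ltW // dens_gt0.
- exact: T_triv.
apply: congr_lim; apply/funext => N; apply: eq_bigr => k _.
by rewrite IH ?all_rcons ?av // /trw foldl_rcons.
Qed.

Definition IU (q : prm) : \bar R := (\int[mu]_(x in U) (dens q x)%:E)%E.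

Lemma mU : measurable (@U R).
Proof. by rewrite -Cyl_nilU; apply: mCyl. Qed.

Lemma IU_ge0 q : good q -> (0 <= IU q)%E.
Proof. by move=> gq; apply: integral_ge0 => x _; rewrite lee_fin ltW // dens_gt0. Qed.

Lemma IU_fin q : good q -> IU q \is a fin_num.
Proof.
move=> gq; rewrite ge0_fin_numE ?IU_ge0 //.
case: q gq => [[[A B] C] E] gq.
have [A0 [B0 [C0 E0]]] := gq.
apply: (@le_lt_trans _ _ (\int[mu]_(x in `]0%R, 1%R[) ((A * C)^-1)%R%:E)%E).
  apply: (@le_trans _ _ (\int[mu]_(x in U) ((A * C)^-1)%R%:E)%E).
    apply: ge0_le_integral => //.
    - exact: mU.
    - by move=> x _; rewrite lee_fin ltW // dens_gt0.
    - exact: mdens.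
    - by move=> x _; rewrite lee_fin; exact: (dens_le _ x gq).
  apply: ge0_subset_integral => //.
  - exact: mU.
  - by move=> x _; rewrite lee_fin invr_ge0 ltW // mulr_gt0.
  - by move=> x [/andP[x0 x1] _]; rewrite /= in_itv /= x0 x1.
rewrite integral_cst //= lebesgue_measure_itv /= lte_fin ltr01 oppr0 adde0.
by rewrite -EFinM ltry.
Qed.

Lemma Sum_int n q P : good q -> Sum n q P = (\int[mu]_(x in T [::] n P) (dens q x)%:E)%E.
Proof. by move=> gq; rewrite int_T. Qed.

Lemma Sum_ge0 n q P : good q -> (0 <= Sum n q P)%E.
Proof.
by move=> gq; rewrite Sum_int //; apply: integral_ge0 => x _; rewrite lee_fin ltW // dens_gt0.
Qed.

Lemma T_sub n P : @T R [::] n P `<=` U.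
Proof. by move=> t []. Qed.

Lemma Sum_compl n q P : good q -> (Sum n q P + Sum n q (predC P))%E = IU q.
Proof.
move=> gq; rewrite !Sum_int // -ge0_integral_setU //.
- congr (integral _ _ _); apply/seteqP; split => t.
    by case => -[Ut _].
  move=> Ut; case: (boolP (P (digs n (iter 0 (@gauss_map R) t)))) => Pt.
    by left; split.
  by right; split.
- exact: mT.
- exact: mT.
- exact: mdens.
- by move=> x _; rewrite lee_fin ltW // dens_gt0.
- rewrite disj_set2E; apply/eqP/seteqP; split => // t [[_ [_ h1]] [_ [_ h2]]].
  by move: h2; rewrite /= h1.
Qed.

Lemma Sum_mono n q1 q2 P : good q1 -> good q2 ->
  (forall t, 0 <= t -> dens q1 t <= dens q2 t) -> (Sum n q1 P <= Sum n q2 P)%E.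
Proof.
move=> g1 g2 h; rewrite !Sum_int //; apply: ge0_le_integral => //.
- exact: mT.
- by move=> x _; rewrite lee_fin ltW // dens_gt0.
- exact: mdens.
- exact: mdens.
- move=> x Tx; rewrite lee_fin; apply: h.
  by have [/andP[/ltW ? _] _] := T_sub _ _ _ Tx.
Qed.

Lemma Sum_fin n q P : good q -> Sum n q P \is a fin_num.
Proof.
move=> gq; rewrite ge0_fin_numE ?Sum_ge0 //.
apply: (@le_lt_trans _ _ (IU q)); last by rewrite ltey_eq IU_fin.
by rewrite -(Sum_compl n q P gq) leeDl // Sum_ge0.
Qed.

Lemma eq_Sum n q P Q : P =1 Q -> Sum n q P = Sum n q Q.
Proof.
elim: n q P Q => [|n IH] q P Q PQ /=; first by rewrite PQ.
by apply: congr_lim; apply/funext => N; apply: eq_bigr => k _; apply: IH => s.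
Qed.

Lemma Sum_true n q P : good q -> P =1 predT -> Sum n q P = IU q.
Proof.
move=> gq PT; rewrite Sum_int //; congr (integral _ _ _); apply/seteqP; split => t.
  by case.
by move=> Ut; split => //; split => //; rewrite PT.
Qed.

Lemma ereal_trade (a b c d : \bar R) : a \is a fin_num -> b \is a fin_num ->
  c \is a fin_num -> d \is a fin_num -> (a + b = c + d)%E -> (a <= c)%E -> (d <= b)%E.
Proof.
move: a b c d => [a| |] [b| |] [c| |] [d| |] //= _ _ _ _.
rewrite -!EFinD => -[h]; rewrite !lee_fin; lra.
Qed.

Lemma SumS_mem n q z : good q ->
  Sum n.+1 q (fun s => z \in s) = (\sum_(k <oo)
    (if k.+1 == z then IU (trp q k.+1) else Sum n (trp q k.+1) (fun s => z \in s)))%E.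
Proof.
move=> gq /=; apply: congr_lim; apply/funext => N; apply: eq_bigr => k _.
case: eqP => [<-|ne].
  by apply: Sum_true; [exact: good_trp | move=> s; rewrite in_cons eqxx].
apply: eq_Sum => s; rewrite in_cons; case: eqP => //= e; by case: ne.
Qed.

Lemma key n (x y : nat) : (0 < x)%N -> (x <= y)%N -> forall q, good q ->
  (Sum n q (fun s => y \in s) <= Sum n q (fun s => x \in s))%E.
Proof.
move=> x0 xy; have [exy|nxy] := eqVneq x y; first by move=> q _; rewrite exy.
have y0 : (0 < y)%N by apply: leq_trans xy.
elim: n => [|n IH] q gq; first by [].
have gk k : good (trp q k.+1) by apply: good_trp.
rewrite !SumS_mem //.
set fy := (fun k => if k.+1 == y then IU (trp q k.+1) else Sum n (trp q k.+1) (fun s => y \in s)).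
set fx := (fun k => if k.+1 == x then IU (trp q k.+1) else Sum n (trp q k.+1) (fun s => x \in s)).
have fy0 k : true -> (0 <= fy k)%E.
  by move=> _; rewrite /fy; case: ifP => _; [exact: IU_ge0 | exact: Sum_ge0].
have fx0 k : true -> (0 <= fx k)%E.
  by move=> _; rewrite /fx; case: ifP => _; [exact: IU_ge0 | exact: Sum_ge0].
have ij : x.-1 != y.-1.
  by apply: contra nxy => /eqP h; rewrite -(prednK x0) -(prednK y0) h.
have ji : y.-1 != x.-1 by rewrite eq_sym.
rewrite (@nneseriesD1 _ fy x.-1 (fun=> true) fy0 isT) (@nneseriesD1 _ fx x.-1 (fun=> true) fx0 isT).
rewrite (@nneseriesD1 _ fy y.-1 (fun k => true && (k != x.-1))) //; last first.
  by move=> k _; exact: fy0.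
rewrite (@nneseriesD1 _ fx y.-1 (fun k => true && (k != x.-1))) //; last first.
  by move=> k _; exact: fx0.
rewrite !addeA; apply: leeD; last first.
  apply: lee_nneseries => [k _ _|k /andP[/andP[_ kx] ky]]; first exact: fy0.
  rewrite /fy /fx; have -> : (k.+1 == y) = false.
    by apply/negbTE; apply: contra ky => /eqP <-.
  have -> : (k.+1 == x) = false.
    by apply/negbTE; apply: contra kx => /eqP <-.
  exact: IH.
rewrite /fy /fx (prednK x0) (prednK y0) eqxx (negbTE nxy) eq_sym (negbTE nxy).
set qx := trp q x; set qy := trp q y.
have gx : good qx by apply: good_trp.
have gy : good qy by apply: good_trp.
set Ey := fun s => y \in s; set Ex := fun s => x \in s.
rewrite -(Sum_compl n qy Ex gy) -(Sum_compl n qx Ey gx).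
have h1 : (Sum n qy (predC Ex) <= Sum n qy (predC Ey))%E.
  apply: (@ereal_trade (Sum n qy Ey) _ (Sum n qy Ex)); rewrite ?Sum_fin //.
    by rewrite !Sum_compl.
  exact: IH.
have h2 : (Sum n qy (predC Ey) <= Sum n qx (predC Ey))%E.
  by apply: Sum_mono => // t t0; apply: dens_mono.
have h3 := le_trans h1 h2.
by rewrite eqxx addeA [X in (_ <= X)%E]addeAC leeD2l // fin_numD !Sum_fin.
Qed.

End Meas.

Local Open Scope ring_scope.
Local Open Scope ereal_scope.

Theorem lemma6 (R : realType) (n : nat) :
  (1 <= n)%N ->
  forall x y : nat, (1 <= x)%N -> (x <= y)%N ->
    gauss_mu (@Nge1 R n y) <= gauss_mu (@Nge1 R n x).
Proof.
move=> _ x y x1 xy.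
pose q0 : @prm R := (ln 2, ln 2, 1, 0)%R.
have l2 : (0 < ln (2:R))%R by rewrite ln_gt0 // ltr1n.
have g0 : good q0 by rewrite /q0 /=; split => //; split; [exact: ltW | split => //].
have E z : gauss_mu (@Nge1 R n z) = Sum n q0 (fun s => z \in s).
  rewrite /gauss_mu Nge1_T.
  rewrite setIidl; last by move=> t [[t01 _] _]; rewrite /= in_itv /=.
  rewrite -(int_T [::]) //; apply: eq_integral => w; rewrite inE => -[[/andP[w0 _] _] _].
  congr EFin; rewrite /dens /q0 /= ger0_norm ?ltW // mul0r addr0 mulr1.
  by rewrite mulrDr mulr1.
rewrite !E; exact: key.
Qed.
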